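(* Let $\mathcal{C}_1,\dots,\mathcal{C}_D\subseteq\mathbb{F}_q^n$ be linear codes and $M\subseteq[n]^D$. Then $M$ is inner-generated for the code $\mathcal{C}_1\boxplus\cdots\boxplus\mathcal{C}_D$ if and only if $M$ is extendable in $\mathcal{C}_1^\perp\otimes\cdots\otimes\mathcal{C}_D^\perp$.
   Context: For $n,D\in\mathbb{N}$ and $i\in[D]$, $\mathcal{L}_i$ is the set of lines in $[n]^D$ parallel to the $i$-th axis (sets $A_1\times\cdots\times A_D$ with $A_i=[n]$, $|A_j|=1$ for $j\ne i$), and $\mathcal{L}=\bigcup_i\mathcal{L}_i$; a line in $\mathcal{L}_i$ is identified with $[n]$ via the $i$-th coordinate. For codes $\mathcal{B}_1,\dots,\mathcal{B}_D\subseteq\mathbb{F}_q^n$, the product code is $\mathcal{B}_1\otimes\cdots\otimes\mathcal{B}_D=\{c\in\mathbb{F}_q^{[n]^D}: c|_\ell\in\mathcal{B}_i\ \forall i\in[D],\ \forall \ell\in\mathcal{L}_i\}$; $\mathcal{B}^{(i)}=\{c: c|_\ell\in\mathcal{B}_i\ \forall\ell\in\mathcal{L}_i\}$ and $\mathcal{B}_1\boxplus\cdots\boxplus\mathcal{B}_D=\sum_i\mathcal{B}^{(i)}$. For $\ell\in\mathcal{L}_i$ let $\mathcal{B}_\ell=\{c\in\mathbb{F}_q^{[n]^D}:\operatorname{supp}c\subseteq\ell,\ c|_\ell\in\mathcal{B}_i\}$. For $M\subseteq[n]^D$, $L(M)=\{\ell\in\mathcal{L}:\ell\subseteq M\}$.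 $M$ is inner-generated for $\mathcal{B}_1\boxplus\cdots\boxplus\mathcal{B}_D$ if every codeword $c$ of this code with $\operatorname{supp}c\subseteq M$ lies in $\sum_{\ell\in L(M)}\mathcal{B}_\ell$. $M$ is extendable for $\mathcal{B}_1\otimes\cdots\otimes\mathcal{B}_D$ if every $c_M\in\mathbb{F}_q^M$ with $c_M|_\ell\in\mathcal{B}_i$ for all $i\in[D]$ and $\ell\in L(M)\cap\mathcal{L}_i$ extends to some $c\in\mathcal{B}_1\otimes\cdots\otimes\mathcal{B}_D$ with $c|_M=c_M$. $\mathcal{C}^\perp$ is the dual code. *)

(* Defs.v *)
From HB Require Import structures.
From mathcomp Require Import all_boot all_order all_algebra.
Set Implicit Arguments. Unset Strict Implicit. Unset Printing Implicit Defensive.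
Import GRing.Theory.
Local Open Scope ring_scope.

(* Points of [n]^D : functions 'I_D -> 'I_n (coordinates 0-based). *)
Definition point (n D : nat) := {ffun 'I_D -> 'I_n}.

Definition word (F : fieldType) (n D : nat) := {ffun point n D -> F}.

Definition code (F : fieldType) (n : nat) := 'rV[F]_n -> Prop.

Definition upd (n D : nat) (p : point n D) (i : 'I_D) (k : 'I_n) : point n D :=
  [ffun j => if j == i then k else p j].

(* The line through p parallel to the i-th axis.  Every line of L_i is
   line i p for some p (p's i-th coordinate is irrelevant). *)
Definition line (n D : nat) (i : 'I_D) (p : point n D) : {set point n D} :=
  [set upd p i k | k : 'I_n].

Definition restr (F : fieldType) (n D : nat) (c : word F n D) (i : 'I_D)
  (p : point n D) : 'rV[F]_n := \row_k c (upd p i k).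

Definition supp_sub (F : fieldType) (n D : nat) (c : word F n D)
  (S : {set point n D}) : Prop := forall x, c x != 0 -> x \in S.

Definition dir_code (F : fieldType) (n D : nat) (B : 'I_D -> code F n)
  (i : 'I_D) (c : word F n D) : Prop := forall p, B i (restr c i p).

Definition prod_code (F : fieldType) (n D : nat) (B : 'I_D -> code F n)
  (c : word F n D) : Prop := forall i, dir_code B i c.

Definition boxplus_code (F : fieldType) (n D : nat) (B : 'I_D -> code F n)
  (c : word F n D) : Prop :=
  exists f : 'I_D -> word F n D,
    (forall i, dir_code B i (f i)) /\ c = \sum_(i < D) f i.

Definition line_code (F : fieldType) (n D : nat) (B : 'I_D -> code F n)
  (i : 'I_D) (p : point n D) (c : word F n D) : Prop :=
  supp_sub c (line i p) /\ B i (restr c i p).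

(* M is inner-generated for B_1 ⊞ ... ⊞ B_D: every codeword supported in M
   lies in sum_{ℓ ∈ L(M)} B_ℓ.  Lines are indexed by pairs (i, p);
   repetitions do not change a sum of subspaces. *)
Definition inner_generated (F : fieldType) (n D : nat) (B : 'I_D -> code F n)
  (M : {set point n D}) : Prop :=
  forall c : word F n D, boxplus_code B c -> supp_sub c M ->
    exists g : 'I_D -> point n D -> word F n D,
      (forall i p, line i p \subset M -> line_code B i p (g i p)) /\
      c = \sum_(i < D) \sum_(p | line i p \subset M) g i p.

(* M is extendable for B_1 ⊗ ... ⊗ B_D.  An element c_M of F^M is
   represented by a word whose values outside M are ignored. *)
Definition extendable (F : fieldType) (n D : nat) (B : 'I_D -> code F n)
  (M : {set point n D}) : Prop :=
  forall cM : word F n D,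
    (forall i p, line i p \subset M -> B i (restr cM i p)) ->
    exists c : word F n D, prod_code B c /\ (forall x, x \in M -> c x = cM x).

Definition dual_code (F : fieldType) (n : nat) (C : {vspace 'rV[F]_n}) : code F n :=
  fun x => forall c, c \in C -> \sum_(k < n) x 0 k * c 0 k = 0.

Definition as_code (F : fieldType) (n : nat) (C : {vspace 'rV[F]_n}) : code F n :=
  fun x => x \in C.

(* Main.v *)
Require Import Defs.
From mathcomp Require Import all_boot all_order all_algebra.
From Stdlib Require Import ClassicalEpsilon Classical.
Set Implicit Arguments. Unset Strict Implicit. Unset Printing Implicit Defensive.
Import GRing.Theory.
Local Open Scope ring_scope.

Section Sep.
Variables (F : finFieldType) (T : finType).
Definition dotw (a b : {ffun T -> F}) := \sum_x a x * b x.

Lemma separate (S : {ffun T -> F} -> Prop) :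
  S 0 -> (forall a u v, S u -> S v -> S [ffun x => a * u x + v x]) ->
  forall v, ~ S v -> exists y, (forall s, S s -> dotw y s = 0) /\ dotw y v != 0.
Proof.
move=> S0 SC v nSv.
pose b (w : {ffun T -> F}) : bool := if excluded_middle_informative (S w) then true else false.
have bP w : b w -> S w by rewrite /b; case: excluded_middle_informative.
have Pb w : S w -> b w by rewrite /b; case: excluded_middle_informative.
pose vec (w : {ffun T -> F}) := \row_(j < #|T|) w (enum_val j).
pose U := \matrix_(k < #|{: {ffun T -> F}}|, j < #|T|)
   (if b (enum_val k) then enum_val k (enum_val j) else 0).
have dotE y w : dotw y w = (vec w *m \col_j y (enum_val j)) 0 0.
  rewrite /dotw !mxE (reindex _ (onW_bij _ (enum_val_bij T))) /=.
  by apply: eq_bigr => j _; rewrite !mxE mulrC.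
have Ssum (I : finType) (G : I -> {ffun T -> F}) : (forall i, S (G i)) -> S (\sum_i G i).
  move=> HG; apply: (big_ind S) => // u w Su Sw.
  have -> : u + w = [ffun x => 1 * u x + w x] by apply/ffunP=> x; rewrite !ffunE mul1r.
  exact: SC.
have subS w : (vec w <= U)%MS -> S w.
  case/submxP=> Dm HD.
  have -> : w = \sum_k [ffun x => Dm 0 k * (if b (enum_val k) then enum_val k x else 0)].
    apply/ffunP=> x; rewrite sum_ffunE.
    have /rowP/(_ (enum_rank x)) := HD; rewrite !mxE enum_rankK => ->.
    by apply: eq_bigr => k _; rewrite !mxE !ffunE enum_rankK.
  apply: Ssum => k.
  case: (boolP (b (enum_val k))) => [/bP Sk|_].
    have -> : [ffun x => Dm 0 k * enum_val k x] = [ffun x => Dm 0 k * enum_val k x + (0 : {ffun T -> F}) x].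
      by apply/ffunP=> x; rewrite !ffunE addr0.
    exact: SC.
  have -> : [ffun x : T => Dm 0 k * 0] = 0 by apply/ffunP=> x; rewrite !ffunE mulr0.
  exact: S0.
have nsub : ~~ (vec v <= U)%MS by apply/negP => /subS.
rewrite submxE in nsub.
have [j Hj] : exists j, (vec v *m cokermx U) 0 j != 0.
  case: (pickP (fun j => (vec v *m cokermx U) 0 j != 0)) => [j Hj|H0]; first by exists j.
  exfalso; move/negP: nsub; apply; apply/eqP/rowP => j.
  by have := H0 j; rewrite /= => /negbFE/eqP ->; rewrite mxE.
exists [ffun x => cokermx U (enum_rank x) j].
have key w : dotw [ffun x => cokermx U (enum_rank x) j] w = (vec w *m cokermx U) 0 j.
  rewrite dotE [LHS]mxE [RHS]mxE; apply: eq_bigr => j0 _; congr (_ * _); by rewrite mxE ffunE enum_valK.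
split; last by rewrite key.
move=> s Ss; rewrite key.
have sU : (vec s <= U)%MS.
  have <- : row (enum_rank s) U = vec s.
    by apply/rowP => j'; rewrite !mxE enum_rankK (Pb s Ss).
  exact: row_sub.
by rewrite submxE in sU; rewrite (eqP sU) mxE.
Qed.
End Sep.

Section Main.
Variables (F : finFieldType) (n D : nat).
Implicit Types (p x : point n D) (i : 'I_D) (k : 'I_n).

Lemma upd_i p i k : upd p i k i = k.
Proof. by rewrite ffunE eqxx. Qed.

Lemma upd_upd p i k k' : upd (upd p i k) i k' = upd p i k'.
Proof. by apply/ffunP=> j; rewrite !ffunE; case: eqP. Qed.

Lemma upd_self p i : upd p i (p i) = p.
Proof. by apply/ffunP=> j; rewrite !ffunE; case: eqP => // ->. Qed.

Lemma upd_eq p i k : (upd p i k == p) = (p i == k).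
Proof.
apply/eqP/eqP => [<-|<-]; first by rewrite upd_i.
exact: upd_self.
Qed.

Lemma upd_line p i k : upd p i k \in line i p.
Proof. by apply/imsetP; exists k. Qed.

Lemma upd_inj p i : injective (upd p i).
Proof. by move=> k1 k2 E; rewrite -(upd_i p i k1) E upd_i. Qed.

Lemma restrE (c : word F n D) i p k : restr c i p 0 k = c (upd p i k).
Proof. by rewrite mxE. Qed.

Lemma dotw_add (a u v : word F n D) : dotw a (u + v) = dotw a u + dotw a v.
Proof. by rewrite /dotw -big_split; apply: eq_bigr => x _; rewrite ffunE mulrDr. Qed.

Lemma dotw0 (a : word F n D) : dotw a 0 = 0.
Proof. by rewrite /dotw big1 // => x _; rewrite ffunE mulr0. Qed.

Lemma dot_sum (a : word F n D) (I : Type) (r : seq I) (P : pred I) (G : I -> word F n D) :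
  dotw a (\sum_(j <- r | P j) G j) = \sum_(j <- r | P j) dotw a (G j).
Proof. exact: (big_morph (dotw a) (dotw_add a) (dotw0 a)). Qed.

Lemma dotwC (a b : word F n D) : dotw a b = dotw b a.
Proof. by apply: eq_bigr => x _; rewrite mulrC. Qed.

Lemma dot_line (a e : word F n D) i p : supp_sub e (line i p) ->
  dotw a e = \sum_k a (upd p i k) * e (upd p i k).
Proof.
move=> He; rewrite /dotw (bigID (fun x => x \in line i p)) /=.
rewrite [X in _ + X]big1 ?addr0; last first.
  move=> x xn; suff -> : e x = 0 by rewrite mulr0.
  by apply/eqP/negP => /negP /He; rewrite (negbTE xn).
rewrite /line big_imset /=; last by move=> k1 k2 _ _; apply: upd_inj.
by apply: eq_bigl.
Qed.

Lemma dot_dir (Ci : {vspace 'rV[F]_n}) (z f : word F n D) i :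
  (forall p, dual_code Ci (restr z i p)) -> (forall p, restr f i p \in Ci) ->
  dotw z f = 0.
Proof.
move=> Hz Hf.
case: (pickP (@predT 'I_n)) => [k0 _|H0]; last first.
  by rewrite /dotw big1 // => x _; have := H0 (x i).
rewrite /dotw (partition_big (fun x : point n D => x i) predT) //=.
transitivity (\sum_(k < n) \sum_(p : point n D | p i == k0) z (upd p i k) * f (upd p i k)).
  apply: eq_bigr => k _.
  rewrite (reindex_onto (fun p : point n D => upd p i k) (fun p : point n D => upd p i k0)) /=; last first.
    by move=> x /eqP <-; rewrite upd_upd upd_self.
  by apply: eq_bigl => p; rewrite upd_i eqxx upd_upd upd_eq.
rewrite exchange_big /= big1 // => p _.
rewrite -[RHS](Hz p (restr f i p) (Hf p)).
by apply: eq_bigr => k _; rewrite !mxE.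
Qed.

Definition ext i p (r : 'rV[F]_n) : word F n D :=
  [ffun x => if x \in line i p then r 0 (x i) else 0].

Lemma ext_supp i p r : supp_sub (ext i p r) (line i p).
Proof. by move=> x; rewrite ffunE; case: ifP => // _; rewrite eqxx. Qed.

Lemma restr_ext i p r : restr (ext i p r) i p = r.
Proof. by apply/rowP=> k; rewrite !mxE ffunE upd_line upd_i. Qed.

Lemma restr_ext_gen i p p' r :
  restr (ext i p r) i p' = r \/ restr (ext i p r) i p' = 0.
Proof.
case: (boolP (upd p' i (p i) \in line i p)) => H.
  left; apply/rowP=> k; rewrite !mxE ffunE upd_i.
  case/imsetP: H => k1 _ E.
  have -> : upd p' i k = upd p i k by rewrite -(upd_upd p' i (p i)) E upd_upd.
  by rewrite upd_line.
right; apply/rowP=> k; rewrite !mxE ffunE.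
case: ifP => // /imsetP [k1 _ E].
by move/negP: H; case; rewrite -(upd_upd p' i k) E upd_upd upd_line.
Qed.

Lemma restr0 i p : restr (0 : word F n D) i p = 0.
Proof. by apply/rowP=> k; rewrite !mxE ffunE. Qed.

Lemma restr_lin a (u v : word F n D) i p :
  restr [ffun x => a * u x + v x] i p = a *: restr u i p + restr v i p.
Proof. by apply/rowP=> k; rewrite !mxE !ffunE. Qed.

Lemma dot_ext (a : word F n D) i p r : dotw a (ext i p r) = \sum_k restr a i p 0 k * r 0 k.
Proof.
rewrite (dot_line a (@ext_supp i p r)); apply: eq_bigr => k _.
by rewrite !mxE ffunE upd_line upd_i.
Qed.

Lemma sum2E (G : 'I_D -> point n D -> word F n D) (P : 'I_D -> pred (point n D)) x :
  (\sum_i \sum_(p | P i p) G i p) x = \sum_i \sum_(p | P i p) G i p x.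
Proof. by rewrite sum_ffunE; apply: eq_bigr => i _; rewrite sum_ffunE. Qed.

End Main.

Theorem proposition1 (F : finFieldType) (n D : nat)
  (C : 'I_D -> {vspace 'rV[F]_n}) (M : {set point n D}) :
  inner_generated (fun i => as_code (C i)) M <->
  extendable (fun i => dual_code (C i)) M.
Proof.
have Pd0 : prod_code (fun i => dual_code (C i)) (0 : word F n D).
  move=> i p c _; rewrite restr0 big1 // => k _; by rewrite mxE mul0r.
have dual_lin : forall (Ci : {vspace 'rV[F]_n}) a (u v : word F n D) i p,
    dual_code Ci (restr u i p) -> dual_code Ci (restr v i p) ->
    dual_code Ci (restr [ffun x => a * u x + v x] i p).
  move=> Ci a u v i p h1 h2 c Hc.
  have -> : \sum_k restr [ffun x => a * u x + v x] i p 0 k * c 0 k =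
      a * (\sum_k restr u i p 0 k * c 0 k) + \sum_k restr v i p 0 k * c 0 k.
    by rewrite mulr_sumr -big_split; apply: eq_bigr => k _; rewrite !mxE ffunE mulrDl mulrA.
  by rewrite h1 // h2 // mulr0 addr0.
have dir0 : forall i, dir_code (fun i => as_code (C i)) i (0 : word F n D).
  by move=> i p; rewrite restr0; exact: mem0v.
have ext_dir : forall i p r, r \in C i -> dir_code (fun i => as_code (C i)) i (ext i p r).
  move=> i p r Hr p'; case: (@restr_ext_gen _ _ _ i p p' r) => ->; first exact: Hr.
  exact: mem0v.
split.
- move=> IG cM HcM.
  pose Q (w : word F n D) := exists z, prod_code (fun i => dual_code (C i)) z /\
     (forall x, x \in M -> z x = w x).
  apply: NNPP => nQ.
  have Q0 : Q 0 by exists 0; split.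
  have QC : forall a u v, Q u -> Q v -> Q [ffun x => a * u x + v x].
    move=> a u v [z1 [P1 E1]] [z2 [P2 E2]].
    exists [ffun x => a * z1 x + z2 x]; split.
      by move=> i p; apply: dual_lin; [apply: P1 | apply: P2].
    by move=> x xM; rewrite !ffunE E1 // E2.
  have [y [Hy Hyc]] := separate Q0 QC nQ.
  have yM : forall x, x \notin M -> y x = 0.
    move=> x xM.
    have Qd : Q [ffun x' => (x' == x)%:R].
      exists 0; split => // x' x'M; rewrite !ffunE.
      by case: eqP => // E; move: xM; rewrite -E x'M.
    have := Hy _ Qd; rewrite /dotw (bigD1 x) //= big1 ?addr0.
      by rewrite ffunE eqxx mulr1.
    by move=> x' /negbTE ne; rewrite ffunE ne mulr0.
  have yPd : forall z, prod_code (fun i => dual_code (C i)) z -> dotw y z = 0.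
    by move=> z Pz; apply: Hy; exists z; split.
  have yW : boxplus_code (fun i => as_code (C i)) y.
    apply: NNPP => nW.
    have W0 : boxplus_code (fun i => as_code (C i)) 0.
      by exists (fun _ => 0); split => //; rewrite big1.
    have WC : forall a u v, boxplus_code (fun i => as_code (C i)) u ->
        boxplus_code (fun i => as_code (C i)) v ->
        boxplus_code (fun i => as_code (C i)) [ffun x => a * u x + v x].
      move=> a u v [f1 [H1 E1]] [f2 [H2 E2]].
      exists (fun i => [ffun x => a * f1 i x + f2 i x]); split.
        move=> i p; rewrite restr_lin; apply: memvD; last exact: H2.
        apply: memvZ; exact: H1.
      apply/ffunP => x; rewrite ffunE E1 E2 !sum_ffunE mulr_sumr -big_split.
      by apply: eq_bigr => i _; rewrite ffunE.
    have [t [Ht Hty]] := separate W0 WC nW.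
    have tPd : prod_code (fun i => dual_code (C i)) t.
      move=> i p c Hc; rewrite -dot_ext; apply: Ht.
      exists (fun i' => if i' == i then ext i p c else 0); split.
        by move=> i'; case: eqP => [->|_]; [apply: ext_dir | apply: dir0].
      rewrite (bigD1 i) //= eqxx big1 ?addr0 // => i' /negbTE ->; by [].
    by move/eqP: Hty; apply; rewrite dotwC; apply: yPd.
  have ysupp : supp_sub y M.
    move=> x yx; apply/negPn/negP => /yM E; by rewrite E eqxx in yx.
  have [g [Hg Eg]] := IG y yW ysupp.
  move/eqP: Hyc; apply; rewrite dotwC Eg dot_sum big1 // => i _.
  rewrite dot_sum big1 // => p H.
  case: (Hg i p H) => Hs Hr; rewrite (dot_line cM Hs).
  rewrite -[RHS](HcM i p H _ Hr).
  by apply: eq_bigr => k _; rewrite !mxE.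
- move=> Ext c [f [Hf Ec]] Hsupp.
  pose S (w : word F n D) := exists g : 'I_D -> point n D -> word F n D,
      (forall i p, line i p \subset M -> line_code (fun i => as_code (C i)) i p (g i p)) /\
      w = \sum_i \sum_(p | line i p \subset M) g i p.
  apply: NNPP => nS.
  have lc0 : forall i p, line_code (fun i => as_code (C i)) i p 0.
    move=> i p; split; last by rewrite restr0; exact: mem0v.
    by move=> x; rewrite ffunE eqxx.
  have S0 : S 0.
    exists (fun _ _ => 0); split => //.
    by rewrite big1 // => i _; rewrite big1.
  have SC : forall a u v, S u -> S v -> S [ffun x => a * u x + v x].
    move=> a u v [g1 [H1 E1]] [g2 [H2 E2]].
    exists (fun i p => [ffun x => a * g1 i p x + g2 i p x]); split.
      move=> i p H; case: (H1 i p H) => s1 r1; case: (H2 i p H) => s2 r2; split.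
        move=> x; rewrite ffunE; apply: contraR => xn.
        have /eqP -> : g1 i p x == 0 by apply: contraR xn; apply: s1.
        have /eqP -> : g2 i p x == 0 by apply: contraR xn; apply: s2.
        by rewrite mulr0 addr0.
      by rewrite restr_lin; apply: memvD => //; apply: memvZ.
    apply/ffunP => x; rewrite ffunE E1 E2 !sum2E mulr_sumr -big_split.
    apply: eq_bigr => i _; rewrite mulr_sumr -big_split.
    by apply: eq_bigr => p _; rewrite ffunE.
  have [y [Hy Hyc]] := separate S0 SC nS.
  have [z [Pz Ez]] : exists z, prod_code (fun i => dual_code (C i)) z /\
      (forall x, x \in M -> z x = y x).
    apply: Ext => i p H r Hr; rewrite -dot_ext; apply: Hy.
    exists (fun i' p' => if (i' == i) && (p' == p) then ext i p r else 0); split.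
      move=> i' p' H'; case: ifP => [/andP [/eqP -> /eqP ->]|_]; last exact: lc0.
      by split; [apply: ext_supp | rewrite restr_ext].
    rewrite (bigD1 i) //= [X in _ + X]big1 ?addr0; last first.
      by move=> i' /negbTE ne; rewrite big1 // => p' _; rewrite ne.
    rewrite (bigD1 p H) /= !eqxx [X in _ + X]big1 ?addr0 //.
    by move=> p' /andP [_ /negbTE ne]; rewrite ne.
  have : dotw z c = dotw y c.
    apply: eq_bigr => x _; case: (boolP (x \in M)) => xM; first by rewrite Ez.
    have /eqP -> : c x == 0 by apply: contraR xM; apply: Hsupp.
    by rewrite !mulr0.
  move=> Ezy; move/eqP: Hyc; apply; rewrite -Ezy.
  rewrite Ec dot_sum big1 // => i _.
  exact: (dot_dir (Pz i) (Hf i)).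
Qed.
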